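(* Let $F_0,F_1$ be pure contexts, $t$ a term, and $k,x,y$ variables with $x\notin\mathrm{fv}(F_0)\cup\mathrm{fv}(F_1)$ and $y\notin\mathrm{fv}(F_1)$. Then $\langle t\{\lambda x.\langle F_1[F_0[x]]\rangle/k\}\rangle \approx \langle t\{\lambda x.\langle (\lambda y.F_1[y])\,F_0[x]\rangle/k\}\rangle$.
   Context: The calculus $\lambda_{\mathcal S}$. Terms: $t ::= x \mid \lambda x.t \mid t\,t \mid \mathcal{S}k.t \mid \langle t\rangle$ (shift and reset); values: $v ::= \lambda x.t \mid x$. $\lambda x.t$ binds $x$, $\mathcal{S}k.t$ binds $k$; terms up to $\alpha$-conversion; $\mathrm{fv}$ free variables; capture-avoiding substitution $t\{v/x\}$. Pure contexts $F ::= [\,] \mid v\,F \mid F\,t$; evaluation contexts $E ::= [\,] \mid v\,E \mid E\,t \mid \langle E\rangle$. Reduction: $E[(\lambda x.t)\,v] \to E[t\{v/x\}]$; $E[\langle F[\mathcal{S}k.t]\rangle] \to E[\langle t\{\lambda x.\langle F[x]\rangle/k\}\rangle]$ ($x\notin\mathrm{fv}(F)$); $E[\langle v\rangle]\to E[v]$. $t\Downarrow t'$ iff $t\to^*t'$ and $t'$ irreducible. Normal forms: values, control stuck terms $F[\mathcal{S}k.t]$, open stuck terms $E[x\,v]$. Fresh: not free in the terms/contexts considered. Refined normal form bisimilarity $\approx$: for a relation $\mathcal R$ on terms, $E_0\mathrel{\mathcal R}E_1$ iff either $E_0=E_0'[\langle F_0\rangle]$, $E_1=E_1'[\langle F_1\rangle]$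 ($F_i$ pure) with $E_0'[x]\mathrel{\mathcal R}E_1'[x]$ and $\langle F_0[x]\rangle\mathrel{\mathcal R}\langle F_1[x]\rangle$ ($x$ fresh), or $E_0=F_0$, $E_1=F_1$ pure with $F_0[x]\mathrel{\mathcal R}F_1[x]$ ($x$ fresh). $v\mathbin{@}y$ is $x\,y$ if $v=x$, $t\{y/x\}$ if $v=\lambda x.t$. $\mathcal R^{\mathrm{rnf}}$ on normal forms: $v_0\mathrel{\mathcal R^{\mathrm{rnf}}}v_1$ if $v_0\mathbin{@}x\mathrel{\mathcal R}v_1\mathbin{@}x$ ($x$ fresh); $E_0[x\,v_0]\mathrel{\mathcal R^{\mathrm{rnf}}}E_1[x\,v_1]$ if $E_0\mathrel{\mathcal R}E_1$ and $v_0\mathrel{\mathcal R^{\mathrm{rnf}}}v_1$; $F_0[\mathcal{S}k.t_0]\mathrel{\mathcal R^{\mathrm{rnf}}}F_1[\mathcal{S}k.t_1]$ if $\langle t_0\{\lambda x.\langle k'\,F_0[x]\rangle/k\}\rangle\mathrel{\mathcal R}\langle t_1\{\lambda x.\langle k'\,F_1[x]\rangle/k\}\rangle$ for fresh $k',x$. $\mathcal R$ is a refined simulation if $t_0\mathrel{\mathcal R}t_1$ and $t_0\Downarrow t_0'$ imply $t_1\Downarrow t_1'$ with $t_0'\mathrel{\mathcal R^{\mathrm{rnf}}}t_1'$; a refined bisimulation if $\mathcal R$ and $\mathcal R^{-1}$ are refined simulations; $\approx$ is the largest refined normal form bisimulation. *)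

(* Defs.v *)
(* The calculus lambda_S (shift/reset) with terms up to
   alpha-conversion, represented by de Bruijn indices. *)
From Stdlib Require Import Arith Relations.

Inductive term : Type :=
| Var   : nat -> term
| Lam   : term -> term            (* \x.t ; x is index 0 in t *)
| App   : term -> term -> term
| Shift : term -> term            (* S k.t ; k is index 0 in t *)
| Reset : term -> term.

Definition is_val (t : term) : Prop :=
  match t with Var _ | Lam _ => True | _ => False end.

Fixpoint lift (c : nat) (t : term) : term :=
  match t with
  | Var n => if n <? c then Var n else Var (S n)
  | Lam t => Lam (lift (S c) t)
  | App t1 t2 => App (lift c t1) (lift c t2)
  | Shift t => Shift (lift (S c) t)
  | Reset t => Reset (lift c t)
  end.

(* subst c v t : t{v/c}, replacing index c by v (v lives in the scope
   outside the c binders) and decrementing indices above c *)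
Fixpoint subst (c : nat) (v : term) (t : term) : term :=
  match t with
  | Var n => if n <? c then Var n
             else if n =? c then Nat.iter c (lift 0) v
             else Var (pred n)
  | Lam t => Lam (subst (S c) v t)
  | App t1 t2 => App (subst c v t1) (subst c v t2)
  | Shift t => Shift (subst (S c) v t)
  | Reset t => Reset (subst c v t)
  end.

(* t{v/x} where x is the variable bound by the enclosing binder of t *)
Definition subst0 (v t : term) : term := subst 0 v t.

Inductive ctx : Type :=
| CHole  : ctx
| CAppR  : term -> ctx -> ctx
| CAppL  : ctx -> term -> ctx
| CReset : ctx -> ctx.

Fixpoint plug (E : ctx) (t : term) : term :=
  match E with
  | CHole => t
  | CAppR v E => App v (plug E t)
  | CAppL E u => App (plug E t) u
  | CReset E => Reset (plug E t)
  end.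

Fixpoint ccomp (E E' : ctx) : ctx :=
  match E with
  | CHole => E'
  | CAppR v E => CAppR v (ccomp E E')
  | CAppL E u => CAppL (ccomp E E') u
  | CReset E => CReset (ccomp E E')
  end.

Fixpoint liftc (c : nat) (E : ctx) : ctx :=
  match E with
  | CHole => CHole
  | CAppR v E => CAppR (lift c v) (liftc c E)
  | CAppL E u => CAppL (liftc c E) (lift c u)
  | CReset E => CReset (liftc c E)
  end.

Fixpoint is_ectx (E : ctx) : Prop :=
  match E with
  | CHole => True
  | CAppR v E => is_val v /\ is_ectx E
  | CAppL E _ => is_ectx E
  | CReset E => is_ectx E
  end.

Fixpoint is_pure (E : ctx) : Prop :=
  match E with
  | CHole => True
  | CAppR v E => is_val v /\ is_pure E
  | CAppL E _ => is_pure E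
  | CReset _ => False
  end.

(* "x fresh": we extend the scope by one fresh variable, which is index 0
   after lifting everything else. *)
Definition plug_fresh (E : ctx) : term := plug (liftc 0 E) (Var 0).

(* The captured continuation \x.<F[x]>, x not in fv(F). *)
Definition cont_of (F : ctx) : term := Lam (Reset (plug_fresh F)).

Inductive step : term -> term -> Prop :=
| step_beta : forall E t v, is_ectx E -> is_val v ->
    step (plug E (App (Lam t) v)) (plug E (subst0 v t))
| step_shift : forall E F t, is_ectx E -> is_pure F ->
    step (plug E (Reset (plug F (Shift t))))
         (plug E (Reset (subst0 (cont_of F) t)))
| step_reset : forall E v, is_ectx E -> is_val v ->
    step (plug E (Reset v)) (plug E v).

Definition irreducible (t : term) : Prop := forall u, ~ step t u.

Definition eval (t t' : term) : Prop :=
  clos_refl_trans term step t t' /\ irreducible t'.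

Definition ctx_rel (R : term -> term -> Prop) (E0 E1 : ctx) : Prop :=
  (exists E0' F0 E1' F1,
      is_ectx E0' /\ is_pure F0 /\ is_ectx E1' /\ is_pure F1 /\
      E0 = ccomp E0' (CReset F0) /\ E1 = ccomp E1' (CReset F1) /\
      R (plug_fresh E0') (plug_fresh E1') /\
      R (Reset (plug_fresh F0)) (Reset (plug_fresh F1)))
  \/
  (is_pure E0 /\ is_pure E1 /\ R (plug_fresh E0) (plug_fresh E1)).

(* v @ x for a fresh x (result lives in the scope extended by x = index 0):
   x' @ x = x' x,  (\z.t) @ x = t{x/z}. *)
Definition vapp_fresh (v : term) : term :=
  match v with
  | Var n => App (Var (S n)) (Var 0)
  | Lam t => t
  | _ => v
  end.

Definition rnf_val (R : term -> term -> Prop) (v0 v1 : term) : Prop :=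
  is_val v0 /\ is_val v1 /\ R (vapp_fresh v0) (vapp_fresh v1).

(* <t{\x.<k' F[x]>/k}> for fresh k', x, where S k.t is the stuck shift;
   the result lives in the scope extended by k' (= index 0). *)
Definition stuck_cont (F : ctx) (t : term) : term :=
  Reset (subst0
           (Lam (Reset (App (Var 1) (plug (liftc 0 (liftc 0 F)) (Var 0)))))
           (lift 1 t)).

Definition rnf (R : term -> term -> Prop) (t0 t1 : term) : Prop :=
  rnf_val R t0 t1
  \/
  (exists E0 E1 x v0 v1,
      is_ectx E0 /\ is_ectx E1 /\
      t0 = plug E0 (App (Var x) v0) /\ t1 = plug E1 (App (Var x) v1) /\
      ctx_rel R E0 E1 /\ rnf_val R v0 v1)
  \/
  (exists F0 F1 s0 s1,
      is_pure F0 /\ is_pure F1 /\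
      t0 = plug F0 (Shift s0) /\ t1 = plug F1 (Shift s1) /\
      R (stuck_cont F0 s0) (stuck_cont F1 s1)).

Definition refined_sim (R : term -> term -> Prop) : Prop :=
  forall t0 t1 t0', R t0 t1 -> eval t0 t0' ->
    exists t1', eval t1 t1' /\ rnf R t0' t1'.

Definition refined_bisim (R : term -> term -> Prop) : Prop :=
  refined_sim R /\ refined_sim (fun a b => R b a).

Definition rnf_bisimilar (t0 t1 : term) : Prop :=
  exists R, refined_bisim R /\ R t0 t1.

(* Main.v *)
Require Import Defs.
From Stdlib Require Import Arith Lia Relations.

Arguments Nat.ltb : simpl never.
Arguments Nat.eqb : simpl never.
Ltac cmp := repeat (match goal with
   | |- context [?a <? ?b] => destruct (Nat.ltb_spec a b)
   | |- context [?a =? ?b] => destruct (Nat.eqb_spec a b)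
   end; cbn); try (exfalso; lia).

Lemma lift_lift : forall t k c, k <= c -> lift (S c) (lift k t) = lift k (lift c t).
Proof.
  induction t; intros k c H; cbn.
  - cmp; f_equal; lia.
  - f_equal; apply IHt; lia.
  - f_equal; auto.
  - f_equal; apply IHt; lia.
  - f_equal; auto.
Qed.

Lemma iter_lift : forall c k v, k <= c -> lift k (Nat.iter c (lift 0) v) = Nat.iter (S c) (lift 0) v.
Proof.
  induction c; intros k v H.
  - assert (k = 0) by lia; subst; reflexivity.
  - destruct k; [reflexivity|].
    change (Nat.iter (S c) (lift 0) v) with (lift 0 (Nat.iter c (lift 0) v)).
    rewrite lift_lift by lia. rewrite IHc by lia. reflexivity.
Qed.

Lemma subst_lift_comm : forall t v k c, k <= c ->
  subst (S c) v (lift k t) = lift k (subst c v t).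
Proof.
  induction t; intros v k c H; cbn.
  - destruct (Nat.ltb_spec n k); cbn.
    + cmp; reflexivity.
    + cmp; try reflexivity.
      * subst. rewrite iter_lift by lia. reflexivity.
      * f_equal; lia.
  - f_equal; apply IHt; lia.
  - f_equal; auto.
  - f_equal; apply IHt; lia.
  - f_equal; auto.
Qed.

Lemma subst_lift_cancel : forall t c w, subst c w (lift c t) = t.
Proof.
  induction t; intros c w; cbn.
  - destruct (Nat.ltb_spec n c); cbn; cmp; try reflexivity; f_equal; lia.
  - f_equal; auto.
  - f_equal; auto.
  - f_equal; auto.
  - f_equal; auto.
Qed.
Fixpoint substc (c : nat) (v : term) (E : ctx) : ctx :=
  match E with
  | CHole => CHole
  | CAppR a E => CAppR (subst c v a) (substc c v E)
  | CAppL E u => CAppL (substc c v E) (subst c v u)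
  | CReset E => CReset (substc c v E)
  end.

Lemma plug_lift : forall E c t, lift c (plug E t) = plug (liftc c E) (lift c t).
Proof. induction E; intros; cbn; f_equal; auto. Qed.
Lemma plug_subst : forall E c v t, subst c v (plug E t) = plug (substc c v E) (subst c v t).
Proof. induction E; intros; cbn; f_equal; auto. Qed.
Lemma liftc_liftc : forall G c, liftc (S c) (liftc 0 G) = liftc 0 (liftc c G).
Proof. induction G; intros; cbn; f_equal; auto; apply lift_lift; lia. Qed.
Lemma substc_liftc : forall G c v, substc (S c) v (liftc 0 G) = liftc 0 (substc c v G).
Proof. induction G; intros; cbn; f_equal; auto; apply subst_lift_comm; lia. Qed.
Lemma substc_liftc_cancel : forall G c w, substc c w (liftc c G) = G.
Proof. induction G; intros; cbn; f_equal; auto; apply subst_lift_cancel. Qed.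

Lemma admin_contract : forall G w,
  subst0 w (plug (liftc 0 G) (Var 0)) = plug G w.
Proof. intros. unfold subst0. rewrite plug_subst, substc_liftc_cancel. reflexivity. Qed.

Lemma val_lift : forall v c, is_val v -> is_val (lift c v).
Proof. intros [] c H; cbn in *; try contradiction; auto. destruct (n <? c); exact I. Qed.
Lemma val_iter : forall c v, is_val v -> is_val (Nat.iter c (lift 0) v).
Proof. induction c; intros; cbn; auto. apply val_lift; apply IHc; auto. Qed.
Lemma val_subst : forall t c v, is_val v -> is_val t -> is_val (subst c v t).
Proof.
  intros [] c v Hv H; cbn in *; try contradiction; auto.
  destruct (n <? c); [exact I|]. destruct (n =? c); [apply val_iter; auto|exact I].
Qed.
Lemma pure_liftc : forall E c, is_pure E -> is_pure (liftc c E).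
Proof. induction E; intros c H; cbn in *; intuition auto using val_lift. Qed.
Lemma ectx_liftc : forall E c, is_ectx E -> is_ectx (liftc c E).
Proof. induction E; intros c H; cbn in *; intuition auto using val_lift. Qed.
Lemma pure_ectx : forall E, is_pure E -> is_ectx E.
Proof. induction E; intros H; cbn in *; intuition. Qed.
Lemma plug_ccomp : forall E E' t, plug (ccomp E E') t = plug E (plug E' t).
Proof. induction E; intros; cbn; f_equal; auto. Qed.
Lemma ccomp_assoc : forall A B C, ccomp (ccomp A B) C = ccomp A (ccomp B C).
Proof. induction A; intros; cbn; f_equal; auto. Qed.
Lemma ectx_ccomp : forall E E', is_ectx E -> is_ectx E' -> is_ectx (ccomp E E').
Proof. induction E; intros; cbn in *; intuition. Qed.
Lemma pure_ccomp : forall E E', is_pure E -> is_pure E' -> is_pure (ccomp E E').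
Proof. induction E; intros; cbn in *; intuition. Qed.

Fixpoint appc (t : term) : nat :=
  match t with
  | Var _ => 0
  | Lam t => appc t
  | App a b => S (appc a + appc b)
  | Shift t => appc t
  | Reset t => appc t
  end.
Fixpoint appcE (E : ctx) : nat :=
  match E with
  | CHole => 0
  | CAppR a E => S (appc a + appcE E)
  | CAppL E a => S (appcE E + appc a)
  | CReset E => appcE E
  end.
Lemma appc_lift : forall t c, appc (lift c t) = appc t.
Proof. induction t; intros; cbn; auto. destruct (n <? c); auto. Qed.
Lemma appcE_liftc : forall E c, appcE (liftc c E) = appcE E.
Proof. induction E; intros; cbn; rewrite ?appc_lift; auto. Qed.
Lemma appc_plug : forall E t, appc (plug E t) = appcE E + appc t.
Proof. induction E; intros; cbn; rewrite ?IHE; lia. Qed.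
Inductive Sm : term -> term -> Prop :=
| Sm_var n : Sm (Var n) (Var n)
| Sm_lam a b : Sm a b -> Sm (Lam a) (Lam b)
| Sm_app a b a' b' : Sm a a' -> Sm b b' -> Sm (App a b) (App a' b')
| Sm_shift a b : Sm a b -> Sm (Shift a) (Shift b)
| Sm_reset a b : Sm a b -> Sm (Reset a) (Reset b)
| Sm_adm G G' u u' : Sc G G' -> Sm u u' ->
    Sm (plug G u) (App (Lam (plug (liftc 0 G') (Var 0))) u')
with Sc : ctx -> ctx -> Prop :=
| Sc_hole : Sc CHole CHole
| Sc_appR v v' G G' : is_val v -> is_val v' -> Sm v v' -> Sc G G' -> Sc (CAppR v G) (CAppR v' G')
| Sc_appL G G' a a' : Sc G G' -> Sm a a' -> Sc (CAppL G a) (CAppL G' a').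

Scheme Sm_ind2 := Induction for Sm Sort Prop
with Sc_ind2 := Induction for Sc Sort Prop.
Combined Scheme SmSc_ind from Sm_ind2, Sc_ind2.

Lemma Sm_refl : forall t, Sm t t.
Proof. induction t; constructor; auto. Qed.
Lemma Sc_refl : forall G, is_pure G -> Sc G G.
Proof. induction G; intros H; cbn in *; try contradiction; constructor; intuition auto using Sm_refl. Qed.

Lemma Sc_pure : forall G G', Sc G G' -> is_pure G /\ is_pure G'.
Proof. intros G G' H; induction H; cbn; intuition. Qed.

Lemma Sc_plug : forall G G', Sc G G' -> forall a a', Sm a a' -> Sm (plug G a) (plug G' a').
Proof. intros G G' H; induction H; intros; cbn; try constructor; auto. Qed.

Lemma SmSc_lift :
  (forall t t', Sm t t' -> forall c, Sm (lift c t) (lift c t')) /\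
  (forall G G', Sc G G' -> forall c, Sc (liftc c G) (liftc c G')).
Proof.
  apply SmSc_ind; intros; cbn; try (constructor; auto using val_lift; fail).
  - destruct (n <? c); constructor.
  - rewrite plug_lift. rewrite plug_lift, liftc_liftc. cbn. constructor; auto.
Qed.

Lemma Sm_iter : forall c v v', Sm v v' -> Sm (Nat.iter c (lift 0) v) (Nat.iter c (lift 0) v').
Proof. induction c; intros; cbn; auto. apply SmSc_lift; apply IHc; auto. Qed.

Lemma SmSc_subst :
  (forall t t', Sm t t' -> forall c v v', is_val v -> is_val v' -> Sm v v' ->
     Sm (subst c v t) (subst c v' t')) /\
  (forall G G', Sc G G' -> forall c v v', is_val v -> is_val v' -> Sm v v' ->
     Sc (substc c v G) (substc c v' G')).
Proof.
  apply SmSc_ind; intros; cbn; try (constructor; auto using val_subst; fail).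
  - destruct (n <? c); [constructor|]. destruct (n =? c); [apply Sm_iter; auto|constructor].
  - rewrite plug_subst. rewrite plug_subst, substc_liftc. cbn. constructor; auto.
Qed.

Inductive SE : ctx -> ctx -> Prop :=
| SE_hole : SE CHole CHole
| SE_appR v v' E E' : is_val v -> is_val v' -> Sm v v' -> SE E E' -> SE (CAppR v E) (CAppR v' E')
| SE_appL E E' a a' : SE E E' -> Sm a a' -> SE (CAppL E a) (CAppL E' a')
| SE_reset E E' : SE E E' -> SE (CReset E) (CReset E')
| SE_adm G G' E E' : Sc G G' -> SE E E' ->
    SE (ccomp G E) (CAppR (Lam (plug (liftc 0 G') (Var 0))) E').

Lemma SE_plug : forall E E', SE E E' -> forall a a', Sm a a' -> Sm (plug E a) (plug E' a').
Proof.
  intros E E' H; induction H; intros; cbn.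
  - auto.
  - constructor; auto.
  - constructor; auto.
  - constructor; auto.
  - rewrite plug_ccomp. constructor; auto.
Qed.

Lemma SE_lift : forall E E', SE E E' -> forall c, SE (liftc c E) (liftc c E').
Proof.
  intros E E' H; induction H; intros; cbn.
  - constructor.
  - constructor; auto using val_lift. apply SmSc_lift; auto.
  - constructor; auto. apply SmSc_lift; auto.
  - constructor; auto.
  - rewrite plug_lift, liftc_liftc. cbn.
    assert (liftc c (ccomp G E) = ccomp (liftc c G) (liftc c E)) as ->.
    { clear. induction G; cbn; f_equal; auto. }
    constructor; auto. apply SmSc_lift; auto.
Qed.

Lemma SE_ectx : forall E E', SE E E' -> is_ectx E /\ is_ectx E'.
Proof.
  intros E E' H; induction H; cbn; intuition.
  apply ectx_ccomp; auto. apply pure_ectx, (Sc_pure _ _ H).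
Qed.
Inductive hs : term -> term -> Prop :=
| hs_beta b v : is_val v -> hs (App (Lam b) v) (subst0 v b)
| hs_shift F s : is_pure F -> hs (Reset (plug F (Shift s))) (Reset (subst0 (cont_of F) s))
| hs_reset v : is_val v -> hs (Reset v) v.

Lemma step_inv : forall t u, step t u ->
  exists E r c, is_ectx E /\ hs r c /\ t = plug E r /\ u = plug E c.
Proof.
  intros t u H; destruct H; do 3 eexists; repeat split; eauto; constructor; auto.
Qed.
Lemma hs_step : forall E r c, is_ectx E -> hs r c -> step (plug E r) (plug E c).
Proof. intros E r c HE H; destruct H; constructor; auto. Qed.
Lemma step_ctx : forall E a b, is_ectx E -> step a b -> step (plug E a) (plug E b).
Proof.
  intros E a b HE H. apply step_inv in H as (E'&r&c&HE'&Hh&->&->).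
  rewrite <- !plug_ccomp. apply hs_step; auto using ectx_ccomp.
Qed.

Definition P (r : term) : Prop :=
  (exists b v, r = App (Lam b) v /\ is_val v) \/ (exists v, r = Reset v /\ is_val v) \/
  (exists F s, is_pure F /\ r = Reset (plug F (Shift s))) \/
  (exists x v, r = App (Var x) v /\ is_val v).

Lemma hs_P : forall r c, hs r c -> P r.
Proof. intros r c H; destruct H; unfold P; eauto 10. Qed.

Lemma plug_val : forall E r, is_val (plug E r) -> E = CHole /\ is_val r.
Proof. intros [] r H; cbn in *; try contradiction; auto. Qed.
Lemma P_notval : forall r, P r -> ~ is_val r.
Proof.
  intros r [(b&v&->&_)|[(v&->&_)|[(F&s&_&->)|(x&v&->&_)]]]; cbn; auto.
Qed.
Lemma plugP_notval : forall E r, P r -> ~ is_val (plug E r).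
Proof. intros E r HP H. apply plug_val in H as [_ H]. eapply P_notval; eauto. Qed.
Lemma shift_notval : forall F s, is_pure F -> ~ is_val (plug F (Shift s)).
Proof. intros [] s HF H; cbn in *; auto. Qed.

Ltac Pdestr HP := destruct HP as [(?b&?v&?&?)|[(?v&?&?)|[(?F&?s&?&?)|(?x&?v&?&?)]]].

Lemma NS : forall F E s r, is_pure F -> is_ectx E -> P r -> plug F (Shift s) <> plug E r.
Proof.
  induction F; intros E s r HF HE HP Heq; destruct E; cbn in *; try discriminate;
    repeat match goal with H : _ /\ _ |- _ => destruct H end; try contradiction.
  all: try (subst r; Pdestr HP; try discriminate;
            match goal with H : App _ _ = App _ _ |- _ => inversion H; subst end).
  all: try (inversion Heq; subst).
  all: try solve [exfalso; first [eapply shift_notval; eassumption | eapply plugP_notval; eassumption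
                           | eapply (shift_notval F s); cbn; eauto]].
  all: try (eapply IHF; eauto; fail).
  all: match goal with H : plug ?F (Shift ?s) = _ |- _ =>
         apply (shift_notval F s); [auto | rewrite H; cbn; auto] end.
Qed.

Lemma P_plug : forall E r, is_ectx E -> P r -> P (plug E r) -> E = CHole.
Proof.
  intros [|v E|E u|E] r HE HP HP'; cbn in *; auto; exfalso;
    repeat match goal with H : _ /\ _ |- _ => destruct H end.
  all: Pdestr HP'; try discriminate;
    match goal with H : _ = _ |- _ => inversion H; subst end.
  all: try solve [eapply plugP_notval; eauto].
  all: try solve [eapply NS; eauto].
  all: match goal with H : plug ?E ?r = _ |- _ =>
         apply (plugP_notval E r); [auto | rewrite H; cbn; auto] end.
Qed.

Lemma UD : forall E1 E2 r1 r2, is_ectx E1 -> is_ectx E2 -> P r1 -> P r2 ->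
  plug E1 r1 = plug E2 r2 -> E1 = E2 /\ r1 = r2.
Proof.
  induction E1; intros E2 r1 r2 H1 H2 P1 P2 Heq.
  - cbn in Heq. subst r1. pose proof (P_plug _ _ H2 P2 P1). subst; auto.
  - destruct E2; cbn in *.
    + subst r2. pose proof (P_plug (CAppR t E1) r1 ltac:(cbn; auto) P1 P2). discriminate.
    + inversion Heq; subst. destruct (IHE1 E2 r1 r2) as [-> ->]; intuition.
    + inversion Heq; subst. exfalso. repeat match goal with H : _ /\ _ |- _ => destruct H end. match goal with H : is_val (plug ?E ?r) |- _ => exact (plugP_notval E r ltac:(assumption) H) end.
    + discriminate.
  - destruct E2; cbn in *.
    + subst r2. pose proof (P_plug (CAppL E1 t) r1 ltac:(cbn; auto) P1 P2). discriminate.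
    + inversion Heq; subst. exfalso. repeat match goal with H : _ /\ _ |- _ => destruct H end. match goal with H : is_val (plug ?E ?r) |- _ => exact (plugP_notval E r ltac:(assumption) H) end.
    + inversion Heq; subst. destruct (IHE1 E2 r1 r2) as [-> ->]; intuition.
    + discriminate.
  - destruct E2; cbn in *; try discriminate.
    + subst r2. pose proof (P_plug (CReset E1) r1 ltac:(cbn; auto) P1 P2). discriminate.
    + inversion Heq; subst. destruct (IHE1 E2 r1 r2) as [-> ->]; intuition.
Qed.

Lemma shift_uniq : forall F F' s s', is_pure F -> is_pure F' ->
  plug F (Shift s) = plug F' (Shift s') -> F = F' /\ s = s'.
Proof.
  induction F; intros F' s s' H H' Heq; destruct F'; cbn in *; try discriminate; try contradiction.
  - inversion Heq; auto.
  - inversion Heq; subst. destruct (IHF F' s s') as [-> ->]; intuition.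
  - inversion Heq; subst. exfalso. repeat match goal with H : _ /\ _ |- _ => destruct H end. match goal with H : is_val (plug ?F (Shift ?s)) |- _ => exact (shift_notval F s ltac:(assumption) H) end.
  - inversion Heq; subst. exfalso. repeat match goal with H : _ /\ _ |- _ => destruct H end. match goal with H : is_val (plug ?F (Shift ?s)) |- _ => exact (shift_notval F s ltac:(assumption) H) end.
  - inversion Heq; subst. destruct (IHF F' s s') as [-> ->]; intuition.
Qed.

Lemma hs_det : forall r c c', hs r c -> hs r c' -> c = c'.
Proof.
  intros r c c' H H'; destruct H; inversion H'; subst; auto.
  all: try (match goal with H : _ = plug ?F (Shift ?s) |- _ =>
         exfalso; apply (shift_notval F s); [auto | rewrite <- H; auto] end; fail).
  all: try (match goal with H : plug ?F (Shift ?s) = _ |- _ =>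
         exfalso; apply (shift_notval F s); [auto | rewrite H; auto] end; fail).
  all: try (exfalso; eapply shift_notval; eassumption).
  destruct (shift_uniq F F0 s s0) as [-> ->]; auto.
Qed.

Lemma step_det : forall t a b, step t a -> step t b -> a = b.
Proof.
  intros t a b Ha Hb.
  apply step_inv in Ha as (E1&r1&c1&HE1&Hh1&->&->).
  apply step_inv in Hb as (E2&r2&c2&HE2&Hh2&Heq&->).
  destruct (UD E1 E2 r1 r2) as [-> ->]; eauto using hs_P.
  f_equal; eapply hs_det; eauto.
Qed.

Definition nf (t : term) : Prop :=
  is_val t \/ (exists E x v, is_ectx E /\ is_val v /\ t = plug E (App (Var x) v)) \/
  (exists F s, is_pure F /\ t = plug F (Shift s)).

Lemma nf_irred : forall t, nf t -> irreducible t.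
Proof.
  intros t Hn u Hs. apply step_inv in Hs as (E&r&c&HE&Hh&->&_).
  pose proof (hs_P _ _ Hh) as HP.
  destruct Hn as [Hv|[(E'&x&v&HE'&Hv&Heq)|(F&s&HF&Heq)]].
  - eapply plugP_notval; eauto.
  - destruct (UD E E' r (App (Var x) v)) as [_ ->]; auto.
    + unfold P; eauto 10.
    + inversion Hh.
  - eapply NS; eauto.
Qed.

Lemma progress : forall t, (exists u, step t u) \/ nf t.
Proof.
  induction t.
  - right; left; cbn; auto.
  - right; left; cbn; auto.
  - destruct IHt1 as [(u&Hu)|[Hv|[(E&x&v&HE&Hv&->)|(F&s&HF&->)]]].
    + left. exists (App u t2). apply (step_ctx (CAppL CHole t2)); cbn; auto.
    + destruct IHt2 as [(u&Hu)|[Hv2|[(E&x&v&HE&Hv'&->)|(F&s&HF&->)]]].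
      * left. exists (App t1 u). apply (step_ctx (CAppR t1 CHole)); cbn; auto.
      * destruct t1; cbn in Hv; try contradiction.
        -- right; right; left. exists CHole, n, t2; cbn; auto.
        -- left. eexists. apply (hs_step CHole); cbn; auto. constructor; auto.
      * right; right; left. exists (CAppR t1 E), x, v; cbn; auto.
      * right; right; right. exists (CAppR t1 F), s; cbn; auto.
    + right; right; left. exists (CAppL E t2), x, v; cbn; auto.
    + right; right; right. exists (CAppL F t2), s; cbn; auto.
  - right; right; right. exists CHole, t; cbn; auto.
  - destruct IHt as [(u&Hu)|[Hv|[(E&x&v&HE&Hv&->)|(F&s&HF&->)]]].
    + left. exists (Reset u). apply (step_ctx (CReset CHole)); cbn; auto.
    + left. eexists. apply (hs_step CHole); cbn; auto. constructor; auto.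
    + right; right; left. exists (CReset E), x, v; cbn; auto.
    + left. eexists. apply (hs_step CHole); cbn; auto. constructor; auto.
Qed.
Lemma VB : forall w v, Sm w v -> is_val v -> is_val w.
Proof. intros w v H Hv; inversion H; subst; cbn in *; auto; contradiction. Qed.

Lemma Sm_val_inv : forall w v, Sm w v -> is_val v ->
  (exists n, w = Var n /\ v = Var n) \/ (exists b0 b, w = Lam b0 /\ v = Lam b /\ Sm b0 b).
Proof. intros w v H Hv; inversion H; subst; cbn in *; try contradiction; eauto 10. Qed.

Lemma SE_pure : forall E E', SE E E' -> is_pure E' -> is_pure E.
Proof.
  intros E E' H; induction H; cbn; intros; intuition.
  apply pure_ccomp; auto. apply (Sc_pure _ _ H).
Qed.

Lemma GD : forall E1, is_ectx E1 -> forall t0 r1, Sm t0 (plug E1 r1) -> ~ is_val r1 ->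
  exists E0 r0, t0 = plug E0 r0 /\ SE E0 E1 /\ Sm r0 r1.
Proof.
  induction E1; intros HE t0 r1 H Hr; cbn in *.
  - exists CHole, t0; cbn; repeat split; auto; constructor.
  - destruct HE as [Hv HE]. inversion H; subst.
    + destruct (IHE1 HE b r1) as (E0&r0&->&HS&Hr0); auto.
      exists (CAppR a E0), r0; cbn; repeat split; auto. constructor; eauto using VB.
    + destruct (IHE1 HE u r1) as (E0&r0&->&HS&Hr0); auto.
      exists (ccomp G E0), r0; rewrite plug_ccomp; repeat split; auto. constructor; auto.
  - inversion H; subst.
    + destruct (IHE1 HE a r1) as (E0&r0&->&HS&Hr0); auto.
      exists (CAppL E0 b), r0; cbn; repeat split; auto. constructor; auto.
    + exfalso. match goal with H : Lam _ = plug _ _ |- _ => 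
        assert (Hx : is_val (plug E1 r1)) by (rewrite <- H; exact I) end.
      apply plug_val in Hx. tauto.
  - inversion H; subst.
    destruct (IHE1 HE a r1) as (E0&r0&->&HS&Hr0); auto.
    exists (CReset E0), r0; cbn; repeat split; auto. constructor; auto.
Qed.

Lemma PD : forall F, is_pure F -> forall X0 s, Sm X0 (plug F (Shift s)) ->
  exists F0 s0, is_pure F0 /\ X0 = plug F0 (Shift s0) /\ SE F0 F /\ Sm s0 s.
Proof.
  intros F HF X0 s H.
  destruct (GD F (pure_ectx _ HF) X0 (Shift s) H) as (E0&r0&->&HS&Hr); [cbn; auto|].
  inversion Hr; subst. exists E0, a; repeat split; auto. eapply SE_pure; eauto.
Qed.

Lemma cont_rel : forall F0 F1, SE F0 F1 -> Sm (cont_of F0) (cont_of F1).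
Proof.
  intros. unfold cont_of, plug_fresh. constructor. constructor.
  apply SE_plug. apply SE_lift; auto. constructor.
Qed.

Lemma HC : forall r0 r1 c1, Sm r0 r1 -> hs r1 c1 ->
  (Sm r0 c1 /\ appc c1 < appc r1) \/ (exists c0, hs r0 c0 /\ Sm c0 c1).
Proof.
  intros r0 r1 c1 H Hh. destruct Hh.
  - inversion H; subst.
    + rename H4 into Ha, H5 into Hw, b0 into w.
      destruct (Sm_val_inv _ _ Ha I) as [(n&_&Hn)|(c&b'&->&Hb&Hbb)]; [discriminate|].
      inversion Hb; subst. right. exists (subst0 w c). split.
      * constructor. eapply VB; eauto.
      * apply SmSc_subst; eauto using VB.
    + left. rewrite admin_contract. split.
      * apply Sc_plug; auto.
      * cbn. rewrite !appc_plug, appcE_liftc. cbn. lia.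
  - inversion H; subst.
    match goal with Hx : Sm a _ |- _ => rename Hx into Ha end.
    destruct (PD F H0 a s Ha) as (F0&s0&HF0&->&HS&Hs).
    right. exists (Reset (subst0 (cont_of F0) s0)). split.
    + constructor; auto.
    + constructor. apply SmSc_subst; cbn; auto. apply cont_rel; auto.
  - inversion H; subst. right. exists a; split; auto. constructor. eapply VB; eauto.
Qed.

Lemma C : forall t0 t1 t1', Sm t0 t1 -> step t1 t1' ->
  (Sm t0 t1' /\ appc t1' < appc t1) \/ (exists t0', step t0 t0' /\ Sm t0' t1').
Proof.
  intros t0 t1 t1' H Hs. apply step_inv in Hs as (E1&r1&c1&HE1&Hh&->&->).
  destruct (GD E1 HE1 t0 r1) as (E0&r0&->&HS&Hr); auto.
  { apply P_notval. eapply hs_P; eauto. }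
  destruct (HC r0 r1 c1 Hr Hh) as [[H1 H2]|(c0&Hc0&H3)].
  - left. split. apply SE_plug; auto. rewrite !appc_plug. lia.
  - right. exists (plug E0 c0). split. apply hs_step; auto. apply (SE_ectx _ _ HS).
    apply SE_plug; auto.
Qed.
Definition Sf (a b : term) : Prop := Sm b a.

Lemma SR : forall E0 E1, SE E0 E1 ->
  (is_pure E0 /\ is_pure E1) \/
  (exists E0' F0 E1' F1, is_pure F0 /\ is_pure F1 /\
     E0 = ccomp E0' (CReset F0) /\ E1 = ccomp E1' (CReset F1) /\ SE E0' E1' /\ SE F0 F1).
Proof.
  intros E0 E1 H; induction H.
  - left; cbn; auto.
  - destruct IHSE as [[]|(E0'&F0&E1'&F1&HF0&HF1&->&->&HA&HB)].
    + left; cbn; auto.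
    + right. exists (CAppR v E0'), F0, (CAppR v' E1'), F1; cbn; repeat split; auto. constructor; auto.
  - destruct IHSE as [[]|(E0'&F0&E1'&F1&HF0&HF1&->&->&HA&HB)].
    + left; cbn; auto.
    + right. exists (CAppL E0' a), F0, (CAppL E1' a'), F1; cbn; repeat split; auto. constructor; auto.
  - destruct IHSE as [[]|(E0'&F0&E1'&F1&HF0&HF1&->&->&HA&HB)].
    + right. exists CHole, E, CHole, E'; cbn; repeat split; auto. constructor.
    + right. exists (CReset E0'), F0, (CReset E1'), F1; cbn; repeat split; auto. constructor; auto.
  - destruct (Sc_pure _ _ H) as [HG HG'].
    destruct IHSE as [[]|(E0'&F0&E1'&F1&HF0&HF1&->&->&HA&HB)].
    + left; cbn; split; auto. apply pure_ccomp; auto.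
    + right. exists (ccomp G E0'), F0, (CAppR (Lam (plug (liftc 0 G') (Var 0))) E1'), F1;
        cbn; repeat split; auto. rewrite ccomp_assoc; auto. constructor; auto.
Qed.

Lemma fresh_rel : forall E0 E1, SE E0 E1 -> Sm (plug_fresh E0) (plug_fresh E1).
Proof. intros. unfold plug_fresh. apply SE_plug. apply SE_lift; auto. constructor. Qed.

Lemma ctxrel : forall E0 E1, SE E0 E1 -> ctx_rel Sm E0 E1 /\ ctx_rel Sf E1 E0.
Proof.
  intros E0 E1 H. destruct (SR E0 E1 H) as [[]|(E0'&F0&E1'&F1&HF0&HF1&->&->&HA&HB)].
  - split; right; repeat split; auto; apply fresh_rel; auto.
  - destruct (SE_ectx _ _ HA). split; left.
    + exists E0', F0, E1', F1; repeat split; auto using fresh_rel.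
      constructor; apply fresh_rel; auto.
    + exists E1', F1, E0', F0; repeat split; auto; unfold Sf; auto using fresh_rel.
      constructor; apply fresh_rel; auto.
Qed.

Lemma val_rel : forall w v, Sm w v -> is_val v -> rnf_val Sm w v /\ rnf_val Sf v w.
Proof.
  intros w v H Hv. destruct (Sm_val_inv w v H Hv) as [(n&->&->)|(b0&b&->&->&Hb)].
  - split; repeat split; cbn; auto; apply Sm_refl.
  - split; repeat split; cbn; auto.
Qed.

Lemma stuck_rel : forall F0 F1 s0 s1, SE F0 F1 -> Sm s0 s1 ->
  Sm (stuck_cont F0 s0) (stuck_cont F1 s1).
Proof.
  intros. unfold stuck_cont. constructor. apply SmSc_subst; cbn; auto.
  - apply SmSc_lift; auto.
  - repeat constructor. apply SE_plug. apply SE_lift, SE_lift; auto. constructor.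
Qed.

Lemma NF : forall a b, Sm a b -> nf b -> nf a /\ rnf Sm a b /\ rnf Sf b a.
Proof.
  intros a b H [Hv|[(E1&x&v1&HE1&Hv1&->)|(F1&s1&HF1&->)]].
  - destruct (val_rel a b H Hv). split; [left; eapply VB; eauto|]. split; left; auto.
  - destruct (GD E1 HE1 a (App (Var x) v1) H) as (E0&r0&->&HS&Hr); [cbn; auto|].
    inversion Hr; subst.
    match goal with Hx : Sm a (Var x) |- _ => inversion Hx; subst end.
    match goal with Hx : Sm b v1 |- _ => rename Hx into Hb end.
    destruct (val_rel b v1 Hb Hv1). destruct (ctxrel E0 E1 HS). destruct (SE_ectx _ _ HS).
    split; [|split].
    + right; left. exists E0, x, b; repeat split; auto. eapply VB; eauto.
    + right; left. exists E0, E1, x, b, v1; split; [|split; [|split; [|split; [|split]]]]; auto.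
    + right; left. exists E1, E0, x, v1, b; split; [|split; [|split; [|split; [|split]]]]; auto.
  - destruct (PD F1 HF1 a s1 H) as (F0&s0&HF0&->&HS&Hs).
    split; [right; right; eauto|]. split; right; right.
    + exists F0, F1, s0, s1; repeat split; auto. apply stuck_rel; auto.
    + exists F1, F0, s1, s0; repeat split; auto. unfold Sf. apply stuck_rel; auto.
Qed.
Lemma irred_nf : forall t, irreducible t -> nf t.
Proof. intros t H. destruct (progress t) as [(u&Hu)|]; auto. exfalso; eapply H; eauto. Qed.

Lemma SimS : forall t0 t0', clos_refl_trans_1n term step t0 t0' -> irreducible t0' ->
  forall t1, Sm t0 t1 -> exists t1', clos_refl_trans term step t1 t1' /\ irreducible t1' /\ Sm t0' t1'.
Proof.
  intros t0 t0' Hr Hi. induction Hr as [t0|t0 a t0' Hs Hr IH].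
  - assert (forall m t1, appc t1 = m -> Sm t0 t1 ->
      exists t1', clos_refl_trans term step t1 t1' /\ irreducible t1' /\ Sm t0 t1') as K.
    { intro m; induction m as [m IHm] using (well_founded_induction lt_wf).
      intros t1 Hm H. destruct (progress t1) as [(u&Hu)|Hn].
      - destruct (C _ _ _ H Hu) as [[H1 H2]|(t0''&H1&H2)].
        + destruct (IHm (appc u)) with (t1 := u) as (t1'&A&B&D); auto; try lia.
          exists t1'; repeat split; auto. eapply rt_trans; [apply rt_step; eauto|auto].
        + exfalso; eapply Hi; eauto.
      - exists t1; repeat split; auto using rt_refl, nf_irred. }
    intros t1 H; eapply K; eauto.
  - assert (forall m t1, appc t1 = m -> Sm t0 t1 ->
      exists t1', clos_refl_trans term step t1 t1' /\ irreducible t1' /\ Sm t0' t1') as K.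
    { intro m; induction m as [m IHm] using (well_founded_induction lt_wf).
      intros t1 Hm H. destruct (progress t1) as [(u&Hu)|Hn].
      - destruct (C _ _ _ H Hu) as [[H1 H2]|(t0''&H1&H2)].
        + destruct (IHm (appc u)) with (t1 := u) as (t1'&A&B&D); auto; try lia.
          exists t1'; repeat split; auto. eapply rt_trans; [apply rt_step; eauto|auto].
        + rewrite (step_det _ _ _ H1 Hs) in H2.
          destruct (IH Hi u H2) as (t1'&A&B&D).
          exists t1'; repeat split; auto. eapply rt_trans; [apply rt_step; eauto|auto].
      - destruct (NF _ _ H Hn) as [Hn0 _]. exfalso; eapply (nf_irred _ Hn0); eauto. }
    intros t1 H; eapply K; eauto.
Qed.

Lemma SimB : forall t1 t1', clos_refl_trans_1n term step t1 t1' ->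
  forall t0, Sm t0 t1 -> exists t0', clos_refl_trans term step t0 t0' /\ Sm t0' t1'.
Proof.
  intros t1 t1' Hr. induction Hr as [t1|t1 u t1' Hs Hr IH]; intros t0 H.
  - exists t0; split; auto using rt_refl.
  - destruct (C _ _ _ H Hs) as [[H1 H2]|(t0''&H1&H2)].
    + apply IH; auto.
    + destruct (IH _ H2) as (t0'&A&B). exists t0'; split; auto.
      eapply rt_trans; [apply rt_step; eauto|auto].
Qed.

Lemma Sm_bisim : refined_bisim Sm.
Proof.
  split.
  - intros t0 t1 t0' H [Hr Hi]. apply clos_rt_rt1n in Hr.
    destruct (SimS _ _ Hr Hi t1 H) as (t1'&A&B&D).
    exists t1'; split; [split; auto|].
    apply (NF _ _ D (irred_nf _ B)).
  - intros t1 t0 t1' H [Hr Hi]. apply clos_rt_rt1n in Hr.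
    destruct (SimB _ _ Hr t0 H) as (t0'&A&D).
    destruct (NF _ _ D (irred_nf _ Hi)) as (Hn&_&Hrnf).
    exists t0'; split; [split; auto using nf_irred|]. exact Hrnf.
Qed.

Theorem lemma6 (F0 F1 : ctx) (t : term) :
  is_pure F0 -> is_pure F1 ->
  rnf_bisimilar
    (Reset (subst0
              (Lam (Reset (plug (liftc 0 F1) (plug (liftc 0 F0) (Var 0)))))
              t))
    (Reset (subst0
              (Lam (Reset (App (Lam (plug (liftc 0 (liftc 0 F1)) (Var 0)))
                               (plug (liftc 0 F0) (Var 0)))))
              t)).
Proof.
  intros H0 H1. exists Sm. split; [apply Sm_bisim|].
  constructor. apply SmSc_subst; cbn; auto; [apply Sm_refl|].
  constructor. constructor. constructor.
  - apply Sc_refl, pure_liftc; auto.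
  - apply Sm_refl.
Qed.
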